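(* Let $n\ge1$, $\boldsymbol\mu\in\mathcal S_n^\cup$, $\boldsymbol\xi\in\mathbb R^n$, $\mathbf y=\boldsymbol\mu+\boldsymbol\xi$, $\hat{\boldsymbol\mu}=\Pi_{\mathcal S_n^\cup}(\mathbf y)$, and let $(\hat T_1,\dots,\hat T_{\hat q})$, $\hat q=q(\hat{\boldsymbol\mu})$, be a partition of $\{1,\dots,n\}$ into sets of consecutive integers such that $\hat{\boldsymbol\mu}$ is affine on each $\hat T_j$. Then $$\|\hat{\boldsymbol\mu}-\boldsymbol\mu\|_2^2\le\sum_{j=1}^{\hat q}\big\|\Pi_{\mathcal S^\cap_{|\hat T_j|}}(\boldsymbol\xi_{\hat T_j})\big\|_2^2 .$$
   Context: For $m\ge3$, $\mathcal S_m^\cup=\{\mathbf u\in\mathbb R^m:2u_i\le u_{i+1}+u_{i-1},\ i=2,\dots,m-1\}$; $\mathcal S_1^\cup=\mathbb R$, $\mathcal S_2^\cup=\mathbb R^2$; $\mathcal S_m^\cap=-\mathcal S_m^\cup$ (concave sequences). $\Pi_K$ is Euclidean projection onto $K$. For $\mathbf u\in\mathcal S_n^\cup$, $q(\mathbf u)$ is one plus the number of strict inequalities $2u_i<u_{i+1}+u_{i-1}$, i.e. the number of affine pieces. For $T=\{t_1<\dots<t_{|T|}\}$, $\boldsymbol\xi_T=(\xi_{t_1},\dots,\xi_{t_{|T|}})^T$. *)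

(* Defs.v *)
(* Vectors of R^m are represented as sequences of length m
   (0-based indices). *)
From HB Require Import structures.
From mathcomp Require Import all_boot all_order all_algebra.
Set Implicit Arguments. Unset Strict Implicit. Unset Printing Implicit Defensive.
Import Order.TTheory GRing.Theory Num.Theory.
Local Open Scope ring_scope.

Section Defs.
Variable R : realFieldType.

(* u in S^cup_m (m = size u): 2 u_i <= u_{i+1} + u_{i-1} at interior indices.
   For m <= 2 this is vacuous, i.e. S^cup_1 = R, S^cup_2 = R^2. *)
Definition convex_seq (u : seq R) : Prop :=
  forall i : nat, (0 < i)%N -> (i.+1 < size u)%N ->
    2 * u`_i <= u`_i.+1 + u`_i.-1.

Definition concave_seq (u : seq R) : Prop := convex_seq (map -%R u).

Definition sqnorm (u : seq R) : R := \sum_(i < size u) u`_i ^+ 2.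
Definition sqdist (u v : seq R) : R := \sum_(i < size u) (u`_i - v`_i) ^+ 2.

Definition vadd (u v : seq R) : seq R := [seq u`_i + v`_i | i <- iota 0 (size u)].

(* p = Pi_K(y): p is the Euclidean projection of y onto the set K of vectors
   of the same length as y (the minimizer, which exists and is unique for
   the closed convex cones considered here). *)
Definition is_proj (K : seq R -> Prop) (y p : seq R) : Prop :=
  size p = size y /\ K p /\
  forall v : seq R, size v = size y -> K v -> sqdist y p <= sqdist y v.

Definition qpieces (u : seq R) : nat :=
  addn 1 (count (fun i : nat => 2 * u`_i < u`_i.+1 + u`_i.-1)
             (iota 1 (size u - 2)%N)).

Definition affine_on (u : seq R) (T : pred nat) : Prop :=
  exists a b : R, forall t : nat, T t -> u`_t = a * t%:R + b.

End Defs.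

(* Partition of {0,..,n-1} into consecutive blocks given by block sizes s:
   block j is the interval [blk_start s j, blk_start s j + s_j). *)
Definition blk_start (s : seq nat) (j : nat) : nat := sumn (take j s).
Definition blk (s : seq nat) (j : nat) : pred nat :=
  fun t => (blk_start s j <= t < blk_start s j + nth 0%N s j)%N.
Definition subvec {R : Type} (s : seq nat) (j : nat) (xi : seq R) : seq R :=
  take (nth 0%N s j) (drop (blk_start s j) xi).

(* Main.v *)
Require Import Defs.
From HB Require Import structures.
From mathcomp Require Import all_boot all_order all_algebra.
From mathcomp Require Import ring lra zify.
Import Order.TTheory GRing.Theory Num.Theory.
Local Open Scope ring_scope.

Section Aux.
Variable R : realFieldType.

Lemma le0_small (a b : R) : 0 <= b ->
  (forall t : R, 0 < t -> t <= 1 -> 2 * t * a <= t ^+ 2 * b) -> a <= 0.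
Proof.
move=> b0 H; rewrite leNgt; apply/negP => a0.
have ab : 0 < a + b by lra.
pose t := a / (a + b).
have t0 : 0 < t by rewrite /t divr_gt0.
have t1 : t <= 1 by rewrite /t ler_pdivrMr // mul1r; lra.
have := H t t0 t1.
have tb : t * (a + b) = a by rewrite /t divfK // gt_eqF.
have e : t ^+ 2 * b = t * a - t ^+ 2 * a.
  have tb' : t * b = a - t * a 
    by transitivity (t * (a + b) - t * a); [ring | rewrite tb].
  by rewrite expr2 -mulrA tb'; ring.
rewrite e => h.
have h1 : 0 < t * a by rewrite mulr_gt0.
have h2 : 0 < t ^+ 2 * a by rewrite mulr_gt0 // exprn_gt0.
lra.
Qed.

Lemma sqdist_var (m : nat) (x p : seq R) (d : nat -> R) (t : R) :
  size x = m ->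
  sqdist x (mkseq (fun k => p`_k + t * d k) m) =
  sqdist x p - 2 * t * (\sum_(k < m) (x`_k - p`_k) * d k)
   + t ^+ 2 * (\sum_(k < m) d k ^+ 2).
Proof.
move=> sx; rewrite /sqdist sx mulr_sumr mulr_sumr -sumrB -big_split /=.
apply: eq_bigr => k _; rewrite nth_mkseq //; ring.
Qed.

Lemma proj_var (m : nat) (x p : seq R) (d : nat -> R) :
  size x = m ->
  (forall t : R, 0 < t -> t <= 1 ->
     sqdist x p <= sqdist x (mkseq (fun k => p`_k + t * d k) m)) ->
  \sum_(k < m) (x`_k - p`_k) * d k <= 0.
Proof.
move=> sx H; apply: (@le0_small _ (\sum_(k < m) d k ^+ 2)).
  by apply: sumr_ge0 => k _; exact: sqr_ge0.
move=> t t0 t1; have := H t t0 t1; rewrite sqdist_var //; lra.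
Qed.


Lemma block_bound (x p w : seq R) :
  size w = size x -> is_proj (@concave_seq R) x p -> concave_seq w ->
  \sum_(k < size x) x`_k * w`_k <= (sqnorm p + sqnorm w) / 2.
Proof.
move=> sw [sp [cp mp]] cw.
have A : \sum_(k < size x) (x`_k - p`_k) * w`_k <= 0.
  apply: proj_var => // t t0 t1; apply: mp; first by rewrite size_mkseq.
  move=> i i0; rewrite size_map size_mkseq => im.
  have im' : (i < size x)%N by apply: ltnW.
  have im'' : (i.-1 < size x)%N by apply: leq_ltn_trans (leq_pred i) im'.
  rewrite !(nth_map (0:R)) ?size_mkseq // !nth_mkseq //.
  idtac.
  have hp := cp i i0; rewrite size_map sp in hp; have {}hp := hp im.
  rewrite !(nth_map 0) ?sp // in hp.
  have hw := cw i i0; rewrite size_map sw in hw; have {}hw := hw im.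
  rewrite !(nth_map 0) ?sw // in hw.
  have := ler_wpM2l (ltW t0) hw. lra.
have E : \sum_(k < size x) x`_k * w`_k =
   \sum_(k < size x) (x`_k - p`_k) * w`_k + \sum_(k < size x) p`_k * w`_k.
  rewrite -big_split; apply: eq_bigr => k _ /=. ring.
have B : 2 * \sum_(k < size x) p`_k * w`_k <= sqnorm p + sqnorm w.
  rewrite /sqnorm sp sw mulr_sumr -big_split; apply: ler_sum => k _.
  rewrite -subr_ge0.
  have -> : p`_k ^+ 2 + w`_k ^+ 2 - 2 * (p`_k * w`_k) = (p`_k - w`_k) ^+ 2 by ring.
  exact: sqr_ge0.
rewrite E; lra.
Qed.

End Aux.

Lemma blk_le (s : seq nat) j : (j < size s)%N ->
  (blk_start s j + nth 0%N s j <= sumn s)%N.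
Proof.
rewrite /blk_start; elim: s j => [|x s IH] [|j] //=.
  by rewrite add0n leq_addr.
by move=> /IH h; rewrite -addnA leq_add2l.
Qed.

Lemma sum_blocks (R : realFieldType) (s : seq nat) (g : nat -> R) (a : nat) :
  \sum_(k < sumn s) g (a + k)%N =
  \sum_(j < size s) \sum_(k < nth 0%N s j) g (a + (blk_start s j + k))%N.
Proof.
rewrite /blk_start; elim: s a => [|x s IH] a /=; first by rewrite !big_ord0.
rewrite big_split_ord big_ord_recl /=; congr (_ + _).
under eq_bigr => i _ do rewrite addnA.
rewrite IH; apply: eq_bigr => j _; rewrite add0n; apply: eq_bigr => k _ /=.
by rewrite !addnA.
Qed.

Theorem mainTheorem8 (R : realFieldType) (n : nat) (mu xi muhat : seq R)
  (s : seq nat) (ps : seq (seq R)) :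
  (1 <= n)%N ->
  size mu = n -> size xi = n ->
  convex_seq mu ->
  is_proj (@convex_seq R) (vadd mu xi) muhat ->
  (* (T_1,...,T_qhat): partition of {0..n-1} into consecutive blocks *)
  all (fun k => 0 < k)%N s -> sumn s = n ->
  size s = qpieces muhat ->
  (forall j, (j < size s)%N -> affine_on muhat (blk s j)) ->
  (* ps_j = Pi_{S^cap_{|T_j|}} (xi_{T_j}) *)
  size ps = size s ->
  (forall j, (j < size s)%N -> is_proj (@concave_seq R) (subvec s j xi) (nth [::] ps j)) ->
  sqdist muhat mu <= \sum_(j < size s) sqnorm (nth [::] ps j).
Proof.
move=> n1 smu sxi cmu [smh [cmh mmh]] spos sums _ aff sps projs.
have sy : size (vadd mu xi) = n by rewrite /vadd size_map size_iota.
have nthy : forall k, (k < n)%N -> (vadd mu xi)`_k = mu`_k + xi`_k.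
  by move=> k kn; rewrite /vadd (nth_map 0%N) ?size_iota ?smu // nth_iota ?smu.
have S1 := @proj_var R n (vadd mu xi) muhat (fun k => mu`_k - muhat`_k) sy.
have {}S1 : \sum_(k < n) ((vadd mu xi)`_k - muhat`_k) * (mu`_k - muhat`_k) <= 0.
  apply: S1 => t t0 t1; apply: mmh; first by rewrite size_mkseq sy.
  move=> i i0; rewrite size_mkseq => im.
  have im' : (i < n)%N by apply: ltnW.
  have im'' : (i.-1 < n)%N by apply: leq_ltn_trans (leq_pred i) im'.
  rewrite !nth_mkseq //.
  have hmu := cmu i i0; rewrite smu in hmu; have {}hmu := hmu im.
  have hmh := cmh i i0; rewrite smh sy in hmh; have {}hmh := hmh im.
  have := ler_wpM2l (ltW t0) hmu.
  have t1' : 0 <= 1 - t by lra.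
  have := ler_wpM2l t1' hmh; lra.
set D := \sum_(k < n) (muhat`_k - mu`_k) ^+ 2.
set X := \sum_(k < n) xi`_k * (muhat`_k - mu`_k).
have DX : D <= X.
  have E : \sum_(k < n) ((vadd mu xi)`_k - muhat`_k) * (mu`_k - muhat`_k) = D - X.
    rewrite /D /X -sumrB; apply: eq_bigr => k _; rewrite nthy //; ring.
  rewrite E in S1; lra.
have Dd : sqdist muhat mu = D.
  by rewrite /sqdist smh sy.
rewrite Dd.
have XE : X = \sum_(j < size s) \sum_(k < nth 0%N s j) xi`_(blk_start s j + k) * (muhat`_(blk_start s j + k) - mu`_(blk_start s j + k)).
  have := @sum_blocks R s (fun k => xi`_k * (muhat`_k - mu`_k)) 0.
  by rewrite sums; exact.
have DE : D = \sum_(j < size s) \sum_(k < nth 0%N s j) (muhat`_(blk_start s j + k) - mu`_(blk_start s j + k)) ^+ 2.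
  have := @sum_blocks R s (fun k => (muhat`_k - mu`_k) ^+ 2) 0.
  by rewrite sums; exact.
have B3 : forall j : 'I_(size s),
  \sum_(k < nth 0%N s j) xi`_(blk_start s j + k) * (muhat`_(blk_start s j + k) - mu`_(blk_start s j + k))
  <= (sqnorm (nth [::] ps j) + \sum_(k < nth 0%N s j) (muhat`_(blk_start s j + k) - mu`_(blk_start s j + k)) ^+ 2) / 2.
  move=> j.
  have jl := ltn_ord j.
  have hB := blk_le s j jl; rewrite sums in hB.
  set B := blk_start s j in hB *; set m := nth 0%N s j in hB *.
  have sx : size (subvec s j xi) = m.
    rewrite /subvec size_takel // size_drop sxi; lia.
  have nx : forall k, (k < m)%N -> (subvec s j xi)`_k = xi`_(B + k).
    by move=> k km; rewrite /subvec nth_take // nth_drop.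
  pose w := mkseq (fun k => muhat`_(B + k) - mu`_(B + k)) m.
  have sw : size w = size (subvec s j xi) by rewrite size_mkseq sx.
  have cw : concave_seq w.
    move=> [|i] // _; rewrite size_map size_mkseq => im.
    rewrite !(nth_map (0:R)) ?size_mkseq // ?nth_mkseq //; try lia.
    have [a [b hab]] := aff j jl.
    have hmu := cmu (B + i.+1) (ltn_addl _ (ltn0Sn i)).
    rewrite smu in hmu; have {}hmu := hmu ltac:(lia).
    have e1 : (B + i.+1).+1 = (B + i.+2)%N by lia.
    have e2 : (B + i.+1).-1 = (B + i)%N by lia.
    rewrite e1 e2 in hmu.
    have ha1 := hab (B + i)%N ltac:(rewrite /blk -/B -/m; apply/andP; split; lia).
    have ha2 := hab (B + i.+1)%N ltac:(rewrite /blk -/B -/m; apply/andP; split; lia).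
    have ha3 := hab (B + i.+2)%N ltac:(rewrite /blk -/B -/m; apply/andP; split; lia).
    have aff3 : muhat`_(B + i.+2) + muhat`_(B + i) = 2 * muhat`_(B + i.+1).
      by rewrite ha1 ha2 ha3 !natrD !mulrS; ring.
    rewrite /=; lra.
  have := @block_bound R _ _ _ sw (projs j jl) cw.
  rewrite sx /sqnorm size_mkseq.
  have -> : \sum_(k < m) (subvec s j xi)`_k * w`_k =
     \sum_(k < m) xi`_(B + k) * (muhat`_(B + k) - mu`_(B + k)).
    by apply: eq_bigr => k _; rewrite nx // nth_mkseq.
  have -> : \sum_(k < m) w`_k ^+ 2 = \sum_(k < m) (muhat`_(B + k) - mu`_(B + k)) ^+ 2.
    by apply: eq_bigr => k _; rewrite nth_mkseq.
  by [].
have L : X <= (\sum_(j < size s) sqnorm (nth [::] ps j) + D) / 2.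
  rewrite XE DE -big_split /= mulr_suml.
  apply: ler_sum => j _; exact: B3 j.
lra.
Qed.
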